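(* Let $X$ be a nonempty set, $\eta\in[0,1)$, $G\subseteq X\times X$ reflexive, symmetric and idempotent ($G\circ G=G$), $\mu$ a finitely additive measure on $\mathcal P(X)$, and $\mu^{\otimes2}$ a finitely additive set function on the product algebra $\mathcal P(X)\otimes\mathcal P(X)$ with $\mu^{\otimes2}(A\times B)=\mu(A)\mu(B)$. Suppose $G$ has finitely many equivalence classes $C_1,\dots,C_m$, that $\mu(C_j)>0$ for all $j$, and that the coupling law $\mu^{\otimes2}((B\times X)\cap G)=\mu(B)+\eta\,\mu^{\otimes2}((B\times X)\cap G)$ holds for all $B\subseteq X$. Then \[\mu(X)=\frac{m}{1-\eta},\qquad \mu^{\otimes2}(G)=\sum_{j=1}^m\mu(C_j)^2=\frac{m}{(1-\eta)^2},\] and $\mu^{\otimes2}((B\times X)\cap G)=\frac{\mu(B)}{1-\eta}$ for every $B\subseteq X$.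
   Context: For relations, $H\circ K=\{(x,z):\exists y\,(x,y)\in H,(y,z)\in K\}$. A finitely additive measure satisfies $\mu(\varnothing)=0$ and additivity on disjoint pairs. The coupling law stated is the coupling law of the axiom system specialized to $R=X$, $I=\varnothing$, $\Pi_R=\mathrm{id}_X$. *)

(* Defs.v *)
From mathcomp Require Import all_boot all_order all_algebra.
From mathcomp Require Import boolp classical_sets reals.
Set Implicit Arguments. Unset Strict Implicit. Unset Printing Implicit Defensive.
Import Order.TTheory GRing.Theory Num.Theory.
Local Open Scope classical_set_scope.
Local Open Scope ring_scope.

Section Defs.
Context {X : Type} {R : realType}.

Definition relcomp (H K : set (X * X)) : set (X * X) :=
  [set p | exists y, H (p.1, y) /\ K (y, p.2)].

Definition rel_reflexive (G : set (X * X)) := forall x, G (x, x).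
Definition rel_symmetric (G : set (X * X)) := forall x y, G (x, y) -> G (y, x).
Definition rel_idempotent (G : set (X * X)) := relcomp G G = G.

Definition rel_class (G : set (X * X)) (x : X) : set X := [set y | G (x, y)].

Definition fin_additive (mu : set X -> R) :=
  mu set0 = 0 /\
  forall A B : set X, A `&` B = set0 -> mu (A `|` B) = mu A + mu B.

Definition prod_algebra (S : set (X * X)) :=
  exists (n : nat) (A B : 'I_n -> set X),
    S = [set p | exists i : 'I_n, A i p.1 /\ B i p.2].

Definition fin_additive_prod (mu2 : set (X * X) -> R) :=
  mu2 set0 = 0 /\
  forall S T, prod_algebra S -> prod_algebra T -> S `&` T = set0 ->
    mu2 (S `|` T) = mu2 S + mu2 T.

End Defs.

(* Main.v *)
Require Import Defs.
From mathcomp Require Import all_boot all_order all_algebra.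
From mathcomp Require Import boolp classical_sets reals.
From mathcomp Require Import ring lra.
Import Order.TTheory GRing.Theory Num.Theory.
Local Open Scope classical_set_scope.
Local Open Scope ring_scope.

Theorem corollary5p6 (R : realType) (X : Type) (x0 : X) (eta : R)
  (G : set (X * X)) (mu : set X -> R) (mu2 : set (X * X) -> R)
  (m : nat) (C : 'I_m -> set X) :
  0 <= eta -> eta < 1 ->
  rel_reflexive G -> rel_symmetric G -> rel_idempotent G ->
  fin_additive mu -> fin_additive_prod mu2 ->
  (forall A B : set X, mu2 (A `*` B) = mu A * mu B) ->
  (* C_1, ..., C_m are exactly the (pairwise distinct) equivalence classes of G *)
  (forall j, exists x, C j = rel_class G x) ->
  injective C ->
  (forall x, exists j, C j = rel_class G x) ->
  (forall j, 0 < mu (C j)) ->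
  (forall B : set X,
     mu2 ((B `*` setT) `&` G) = mu B + eta * mu2 ((B `*` setT) `&` G)) ->
  [/\ mu setT = m%:R / (1 - eta),
      mu2 G = \sum_(j < m) mu (C j) ^+ 2,
      \sum_(j < m) mu (C j) ^+ 2 = m%:R / (1 - eta) ^+ 2
    & forall B : set X, mu2 ((B `*` setT) `&` G) = mu B / (1 - eta)].
Proof.
move=> eta0 eta1 Hrefl Hsym Hid [mu0 muD] _ Hprod Hcl Cinj Hcov Hpos Hcoup.
have ne : 1 - eta != 0 by rewrite subr_eq0 eq_sym lt_eqF.
have trans : forall a b c, G (a, b) -> G (b, c) -> G (a, c).
  move=> a b c ab bc; suff : relcomp G G (a, c) by rewrite Hid.
  by exists b.
have P4 : forall B : set X, mu2 ((B `*` setT) `&` G) = mu B / (1 - eta).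
  move=> B; set s := mu2 _; have h := Hcoup B; rewrite -/s in h.
  have hB : mu B = s * (1 - eta) by lra.
  by rewrite hB mulfK.
have inC : forall j x, C j x -> C j = rel_class G x.
  move=> j x; case: (Hcl j) => a ->; rewrite /rel_class /= => ax.
  apply/seteqP; split => y /=.
    by move=> ay; apply: trans (Hsym _ _ ax) ay.
  by move=> xy; apply: trans ax xy.
have Cc : forall j, mu (C j) = (1 - eta)^-1.
  move=> j.
  have e : (C j `*` setT) `&` G = C j `*` C j.
    case: (Hcl j) => a ->; rewrite /rel_class.
    apply/seteqP; split => -[x y] /=.
      by move=> [[ax _] xy]; split => //; apply: trans ax xy.
    by move=> [ax ay]; split => //; apply: trans (Hsym _ _ ax) ay.
  have := P4 (C j); rewrite e Hprod => h.
  have hp := Hpos j.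
  apply: (mulfI (x := mu (C j))); first by rewrite gt_eqF.
  by rewrite h mulrC.
pose U n := [set x | exists j : 'I_m, (j < n)%N /\ C j x].
have HU : forall n, (n <= m)%N -> mu (U n) = n%:R * (1 - eta)^-1.
  elim=> [|n IH] hn.
    rewrite mul0r -mu0; congr mu; apply/seteqP; split => x //=.
    by move=> [j []].
  have hnm : (n < m)%N by [].
  have e : U n.+1 = U n `|` C (Ordinal hnm).
    apply/seteqP; split => x /=.
      move=> [j [jn cj]]; rewrite ltnS leq_eqVlt in jn.
      case/orP: jn => [/eqP jn|jn]; last by left; exists j.
      right; suff -> : Ordinal hnm = j by [].
      by apply: val_inj.
    case=> [[j [jn cj]]|cn]; first by exists j; split => //; apply: ltnW.
    by exists (Ordinal hnm); split.
  rewrite e muD; last first.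
    apply/seteqP; split => x //= [[j [jn cj]] cn].
    have := inC _ _ cj; rewrite -(inC _ _ cn) => /Cinj jj.
    by move: jn; rewrite jj /= ltnn.
  rewrite IH; last exact: ltnW.
  by rewrite Cc -addn1 natrD mulrDl mul1r.
have UT : U m = setT.
  apply/seteqP; split => x // _.
  case: (Hcov x) => j hj; exists j; split => //.
  by rewrite hj; apply: Hrefl.
have MT : mu setT = m%:R / (1 - eta) by rewrite -UT HU.
have S : \sum_(j < m) mu (C j) ^+ 2 = m%:R / (1 - eta) ^+ 2.
  under eq_bigr => j _ do rewrite Cc.
  by rewrite sumr_const card_ord exprVn mulr_natl.
have GT : (setT `*` setT) `&` G = G.
  by apply/seteqP; split => -[x y] //= [].
split; [exact: MT | | exact: S | exact: P4].
by rewrite S -GT P4 MT -mulrA -invfM -expr2.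
Qed.
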